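(* Let $n,q\ge1$ and let $c_1,c_2$ be integers with $c_1+c_2=-2$. If there exist a $PComS(n,q,c_1)$ and a $PComS(n,q,c_2)$, then there exists a partial Hadamard matrix $PH(2n\times 2(nq+1))$.
   Context: $\mathbb{Z}_2^n$ is the set of sequences $X=(x_0,\dots,x_{n-1})$ with entries in $\{+1,-1\}$, indices mod $n$. The periodic autocorrelation is $\mathsf{P}_X(k)=\sum_{i=0}^{n-1}x_ix_{i+k}$; it depends only on the cyclic-shift class $X_C$. A $PComS(n,q,c)$ is a list (repetitions allowed) of $q$ cyclic-shift classes $A_{1C},\dots,A_{qC}$ with $A_i\in\mathbb{Z}_2^n$ such that $\sum_{i=1}^q\mathsf{P}_{A_i}(k)=c$ for all $1\le k\le n-1$. A partial Hadamard matrix $PH(k\times m)$ is a $k\times m$ matrix $H$ with all entries in $\{+1,-1\}$ satisfying $HH^{t}=mI_k$. *)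

(* Defs.v *)
From HB Require Import structures.
From mathcomp Require Import all_boot all_order all_algebra.
Set Implicit Arguments. Unset Strict Implicit. Unset Printing Implicit Defensive.
Import Order.TTheory GRing.Theory Num.Theory.
Local Open Scope ring_scope.

Definition pm1 (x : int) : bool := (x == 1) || (x == -1).

Definition is_pmseq (n : nat) (X : seq int) : bool :=
  (size X == n) && all pm1 X.

Definition paut (X : seq int) (k : nat) : int :=
  \sum_(i < size X) X`_i * X`_((i + k) %% size X).

(* PComS(n,q,c): a list of q sequences of Z_2^n (representatives of the
   cyclic-shift classes; P_X only depends on the class) with
   sum_i P_{A_i}(k) = c for all 1 <= k <= n-1. *)
Definition PComS (n q : nat) (c : int) (L : seq (seq int)) : Prop :=
  [/\ size L = q,
      (forall X, X \in L -> is_pmseq n X) &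
      (forall k : nat, (1 <= k <= n - 1)%N -> \sum_(X <- L) paut X k = c)].

Definition PH (k m : nat) (H : 'M[int]_(k, m)) : Prop :=
  (forall i j, pm1 (H i j)) /\ H *m H^T = (m%:Z)%:M.

(* Main.v *)
Require Import Defs.
From mathcomp Require Import all_boot all_order all_algebra.
From mathcomp Require Import zify ring.
Import GRing.Theory Num.Theory.
Set Implicit Arguments. Unset Strict Implicit.
Local Open Scope ring_scope.

Definition per (n : nat) (h : int -> int) := forall x y : int, (x %% n = y %% n)%Z -> h x = h y.

Lemma per_shift n h s : per n h -> per n (fun x => h (x + s)).
Proof. by move=> P x y E; apply: P; rewrite -modzDml E modzDml. Qed.

Lemma per_neg n h : per n h -> per n (fun x => h (- x)).
Proof. by move=> P x y E; apply: P; rewrite -modzNm E modzNm. Qed.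

Lemma per_rsub n h s : per n h -> per n (fun x => h (s - x)).
Proof. by move=> P x y E; apply: P; rewrite -modzDmr -modzNm E modzNm modzDmr. Qed.

Lemma per_mul n h g : per n h -> per n g -> per n (fun x => h x * g x).
Proof. by move=> P Q x y E; rewrite (P x y E) (Q x y E). Qed.

Lemma shift1 n h : (0 < n)%N -> per n h ->
  \sum_(j < n) h (j%:Z + 1) = \sum_(j < n) h j%:Z.
Proof.
case: n => // n _ P.
rewrite [LHS]big_ord_recr [RHS]big_ord_recl /= addrC; congr (_ + _).
  rewrite -[_ + 1]PoszD addn1; apply: P.
  by rewrite modzz mod0z.
by apply: eq_bigr => i _; rewrite /= /bump /= add1n -addn1 PoszD.
Qed.

Lemma shiftn n h (m : nat) : (0 < n)%N -> per n h ->
  \sum_(j < n) h (j%:Z + m%:Z) = \sum_(j < n) h j%:Z.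
Proof.
move=> n0; elim: m h => [|m IH] h P.
  by apply: eq_bigr => i _; rewrite addr0.
rewrite -(shift1 n0 P) -(IH (fun x => h (x + 1))); last exact: per_shift.
by apply: eq_bigr => i _; rewrite -addrA -[m.+1]addn1 PoszD.
Qed.

Lemma shift n h (s : int) : (0 < n)%N -> per n h ->
  \sum_(j < n) h (j%:Z + s) = \sum_(j < n) h j%:Z.
Proof.
move=> n0 P; rewrite -(shiftn (absz (s %% n)%Z) n0 P).
apply: eq_bigr => i _; apply: P.
rewrite gez0_abs ?modz_ge0 // ?modzDmr //.
by rewrite eqz_nat -lt0n.
Qed.

Lemma refl n h : (0 < n)%N -> per n h ->
  \sum_(j < n) h (- j%:Z) = \sum_(j < n) h j%:Z.
Proof.
move=> n0 P; rewrite -(shift1 n0 P) (reindex_inj rev_ord_inj) /=.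
apply: eq_bigr => j _; apply: P.
rewrite -subzn ?ltn_ord //.
have -> : - (n%:Z - (j.+1)%:Z) = (-1) * n%:Z + (j%:Z + 1).
  by rewrite -addn1 PoszD; ring.
by rewrite modzMDl.
Qed.

Lemma reflS n h s : (0 < n)%N -> per n h ->
  \sum_(j < n) h (s - j%:Z) = \sum_(j < n) h j%:Z.
Proof.
move=> n0 P; rewrite -(shift s n0 P) -(refl n0 (per_shift s P)).
by apply: eq_bigr => j _; rewrite addrC.
Qed.

Definition fe (n : nat) (L : seq (seq int)) (t : nat) (x : int) : int :=
  (nth [::] L t)`_(absz (x %% n)%Z).

Lemma per_fe n L t : per n (fe n L t).
Proof. by move=> x y E; rewrite /fe E. Qed.

Lemma inner n L t d : (0 < n)%N -> size (nth [::] L t) = n ->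
  \sum_(j < n) fe n L t j%:Z * fe n L t (j%:Z + d)
  = paut (nth [::] L t) (absz (d %% n)%Z).
Proof.
move=> n0 sz; rewrite /paut sz; apply: eq_bigr => j _; rewrite /fe.
have nz : (n%:Z != 0) by rewrite eqz_nat -lt0n.
rewrite modz_nat /= modn_small ?ltn_ord //; congr (_ * _).
rewrite -modzDmr -{1}(gez0_abs (modz_ge0 d nz)) -PoszD modz_nat.
by [].
Qed.

Lemma paut0 n X : is_pmseq n X -> paut X 0 = n%:Z.
Proof.
case/andP=> /eqP sz /allP A; rewrite /paut.
rewrite (eq_bigr (fun _ => 1)); last first.
  move=> i _; rewrite addn0 modn_small ?ltn_ord //.
  by case/orP: (A _ (mem_nth 0 (ltn_ord i))) => /eqP ->.
by rewrite sumr_const card_ord sz natz.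
Qed.

Lemma outer n q c L d : (0 < n)%N -> PComS n q c L ->
  \sum_(0%N <= t < q) paut (nth [::] L t) (absz (d %% n)%Z)
  = if (d %% n == 0)%Z then (n * q)%:Z else c.
Proof.
move=> n0 [szL mem sumc].
have nz : (n%:Z != 0) by rewrite eqz_nat -lt0n.
case: ifP => H.
  rewrite (eqP H) /=.
  rewrite (eq_big_nat _ _ (F2 := fun _ => n%:Z)); last first.
    move=> t /andP[_ tq]; apply: paut0; apply: mem; apply: mem_nth; by rewrite szL.
  by rewrite sumr_const_nat subn0 PoszM -mulr_natr natz.
have k1 : (1 <= absz (d %% n)%Z)%N.
  by rewrite lt0n absz_eq0 H.
have k2 : (absz (d %% n)%Z <= n - 1)%N.
  have := ltz_mod d nz; rewrite -{1}(gez0_abs (modz_ge0 d nz)) ltz_nat /=.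
  by move=> h; rewrite leq_subRL ?add1n.
have kk : (1 <= absz (d %% n)%Z <= n - 1)%N by rewrite k1 k2.
rewrite -(sumc _ kk) (big_nth [::]) szL.
by [].
Qed.

Lemma size_nth_L n q c L t : PComS n q c L -> (t < q)%N -> size (nth [::] L t) = n.
Proof.
case=> szL mem _ tq; have tL : (t < size L)%N by rewrite szL.
by have /andP[/eqP -> _] := mem _ (mem_nth [::] tL).
Qed.

Lemma keyA n q c L r r' : (0 < n)%N -> PComS n q c L ->
  \sum_(0%N <= t < q) \sum_(j < n) fe n L t (j%:Z - r) * fe n L t (j%:Z - r')
  = if ((r - r') %% n == 0)%Z then (n * q)%:Z else c.
Proof.
move=> n0 H; rewrite -(outer (r - r') n0 H).
apply: eq_big_nat => t /andP[_ tq].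
rewrite -(inner (r - r') n0 (size_nth_L H tq)).
have P : per n (fun x => fe n L t (x - r) * fe n L t (x - r')).
  by apply: per_mul; apply: per_shift; apply: per_fe.
rewrite -(shift r n0 P) /=.
by apply: eq_bigr => j _; congr (fe _ _ _ _ * fe _ _ _ _); ring.
Qed.

Lemma keyR n q c L r r' : (0 < n)%N -> PComS n q c L ->
  \sum_(0%N <= t < q) \sum_(j < n) fe n L t (r - j%:Z) * fe n L t (r' - j%:Z)
  = if ((r - r') %% n == 0)%Z then (n * q)%:Z else c.
Proof.
move=> n0 H; rewrite -(outer (r - r') n0 H).
apply: eq_big_nat => t /andP[_ tq].
rewrite -(inner (r - r') n0 (size_nth_L H tq)).
have P : per n (fun x => fe n L t (r - x) * fe n L t (r' - x)).
  apply: per_mul; by apply: per_rsub; apply: per_fe.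
have Q : per n (fun x => fe n L t (x + r) * fe n L t (x + r')).
  by apply: per_mul; apply: per_shift; apply: per_fe.
rewrite -(refl n0 P) /=.
transitivity (\sum_(j < n) fe n L t (j%:Z + r) * fe n L t (j%:Z + r')).
  by apply: eq_bigr => j _; congr (fe _ _ _ _ * fe _ _ _ _); ring.
rewrite -(shift (- r') n0 Q) /=.
by apply: eq_bigr => j _; rewrite mulrC; congr (fe _ _ _ _ * fe _ _ _ _); ring.
Qed.

Lemma cross n L M t r r' : (0 < n)%N ->
  \sum_(j < n) fe n L t (j%:Z - r) * fe n M t (r' - j%:Z)
  = \sum_(j < n) fe n M t (j%:Z - r) * fe n L t (r' - j%:Z).
Proof.
move=> n0.
have P : per n (fun x => fe n L t (x - r) * fe n M t (r' - x)).
  apply: per_mul; first by apply: per_shift; apply: per_fe.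
  by apply: per_rsub; apply: per_fe.
rewrite -(reflS (r + r') n0 P) /=.
by apply: eq_bigr => j _; rewrite mulrC; congr (fe _ _ _ _ * fe _ _ _ _); ring.
Qed.
Lemma modeq0 (n r r' : nat) : (0 < n)%N -> (r < n)%N -> (r' < n)%N ->
  ((r%:Z - r'%:Z) %% n = 0)%Z -> r = r'.
Proof.
move=> n0 h1 h2 E.
have := divz_eq (r%:Z - r'%:Z) n; rewrite E addr0.
set k := ((r%:Z - r'%:Z) %/ n)%Z => e.
have n0' : (0 <= n%:Z) by [].
have [kn|kp|k0] := ltrgtP k 0.
- have : k <= -1 by lia.
  move/(ler_wpM2r n0') => h; lia.
- have : 1 <= k by lia.
  move/(ler_wpM2r n0') => h; lia.
- rewrite k0 mul0r in e; lia.
Qed.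
Lemma idx_eq (n i i' : nat) : (i < 2 * n)%N -> (i' < 2 * n)%N -> (i < n)%N = (i' < n)%N -> (i %% n = i' %% n)%N -> i = i'.
Proof.
move=> h1 h2.
have F : forall x, (x < 2 * n)%N -> (n <= x)%N -> (x %% n = x - n)%N.
  move=> x hx hn. rewrite -{1}(subnKC hn) modnDl modn_small //. lia.
case: (ltnP i n) => a; case: (ltnP i' n) => b //= _.
  by rewrite !modn_small.
by rewrite !F //; lia.
Qed.

Lemma sum_shift (a m : nat) (F : nat -> int) :
  \sum_(a <= k < (a + m)%N) F k = \sum_(0%N <= k < m) F (k + a)%N.
Proof. by rewrite -{1}[a]add0n big_addn addKn. Qed.

Lemma sum_blocks (n q : nat) (G : nat -> int) :
  \sum_(0%N <= k < (n * q)%N) G k = \sum_(0%N <= t < q) \sum_(j < n) G (t * n + j)%N.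
Proof.
elim: q => [|q IH]; first by rewrite muln0 !big_geq.
rewrite mulnS addnC (@big_cat_nat _ _ _ (n * q)) ?leq_addr //= IH.
rewrite big_nat_recr //=; congr (_ + _).
rewrite sum_shift big_mkord; apply: eq_bigr => j _.
by rewrite addnC mulnC.
Qed.

Definition Ent n q (A B : seq (seq int)) (top : bool) (r : int) (k : nat) : int :=
  if (k < n * q)%N then
    (if top then fe n A (k %/ n)%N ((k %% n)%N%:Z - r)
     else fe n B (k %/ n)%N (r - (k %% n)%N%:Z))
  else if (k < 2 * (n * q))%N then
    (if top then fe n B ((k - n * q) %/ n)%N (((k - n * q) %% n)%N%:Z - r)
     else - fe n A ((k - n * q) %/ n)%N (r - ((k - n * q) %% n)%N%:Z))
  else if k == (2 * (n * q))%N then 1 else if top then 1 else -1.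

Lemma blk_lt n q t j : (t < q)%N -> (j < n)%N -> (t * n + j < n * q)%N.
Proof.
move=> tq jn; apply: (@leq_trans (t * n + n)); first by rewrite ltn_add2l.
by rewrite addnC -mulSn mulnC leq_mul2l tq orbT.
Qed.

Lemma blk_div n t j : (j < n)%N -> ((t * n + j) %/ n = t)%N /\ ((t * n + j) %% n = j)%N.
Proof.
move=> jn; have n0 : (0 < n)%N by case: n jn.
by rewrite divnMDl // modnMDl divn_small // modn_small // addn0.
Qed.

Lemma Ent1 n q A B top r t j : (t < q)%N -> (j < n)%N ->
  Ent n q A B top r (t * n + j)%N =
  if top then fe n A t (j%:Z - r) else fe n B t (r - j%:Z).
Proof.
move=> tq jn; rewrite /Ent blk_lt //; have [-> ->] := blk_div t jn; by [].
Qed.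

Lemma Ent2 n q A B top r t j : (t < q)%N -> (j < n)%N ->
  Ent n q A B top r (t * n + j + n * q)%N =
  if top then fe n B t (j%:Z - r) else - fe n A t (r - j%:Z).
Proof.
move=> tq jn; have h := blk_lt tq jn.
rewrite /Ent addnK; have [-> ->] := blk_div t jn.
have -> : (t * n + j + n * q < n * q)%N = false by apply/negbTE; rewrite -leqNgt leq_addl.
by have -> : (t * n + j + n * q < 2 * (n * q))%N by rewrite mul2n -addnn ltn_add2r.
Qed.

Lemma Ent3 n q A B top r : Ent n q A B top r (n * q + n * q)%N = 1.
Proof.
rewrite /Ent; set m := (n * q)%N.
have -> : (m + m < m)%N = false by lia.
have -> : (m + m < 2 * m)%N = false by lia.
by have -> : (m + m == 2 * m)%N by apply/eqP; lia.
Qed.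

Lemma Ent4 n q A B top r : Ent n q A B top r (n * q + n * q)%N.+1 = if top then 1 else -1.
Proof.
rewrite /Ent; set m := (n * q)%N.
have -> : ((m + m).+1 < m)%N = false by lia.
have -> : ((m + m).+1 < 2 * m)%N = false by lia.
by have -> : ((m + m).+1 == 2 * m)%N = false by apply/negbTE/eqP; lia.
Qed.

Lemma gram n q c1 c2 A B top top' r r' : (0 < n)%N ->
  PComS n q c1 A -> PComS n q c2 B -> c1 + c2 = -2 ->
  \sum_(0%N <= k < (2 * (n * q + 1))%N) Ent n q A B top r k * Ent n q A B top' r' k
  = if top == top' then (if ((r - r') %% n == 0)%Z then (2 * (n * q + 1))%N%:Z else 0) else 0.
Proof.
move=> n0 HA HB hc.
have -> : (2 * (n * q + 1) = (n * q + n * q).+2)%N by lia.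
have split : forall F : nat -> int,
  \sum_(0%N <= k < (n * q + n * q).+2) F k =
  \sum_(0%N <= k < (n * q)%N) F k + \sum_(0%N <= k < (n * q)%N) F (k + n * q)%N
  + F (n * q + n * q)%N + F (n * q + n * q).+1.
  move=> F; rewrite big_nat_recr // big_nat_recr // (@big_cat_nat _ _ _ (n * q)) ?leq_addr //.
  congr (_ + _ + _ + _); exact: sum_shift.
rewrite split !sum_blocks Ent3 Ent4 Ent3 Ent4.
rewrite (eq_big_nat _ _ (F2 := fun t => \sum_(j < n)
   (if top then fe n A t (j%:Z - r) else fe n B t (r - j%:Z)) *
   (if top' then fe n A t (j%:Z - r') else fe n B t (r' - j%:Z)))); last first.
  by move=> t /andP[_ tq]; apply: eq_bigr => j _; rewrite !Ent1.
rewrite [X in _ + X + _ + _ = _](eq_big_nat _ _ (F2 := fun t => \sum_(j < n)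
   (if top then fe n B t (j%:Z - r) else - fe n A t (r - j%:Z)) *
   (if top' then fe n B t (j%:Z - r') else - fe n A t (r' - j%:Z)))); last first.
  by move=> t /andP[_ tq]; apply: eq_bigr => j _; rewrite !Ent2.
case: top; case: top' => /=.
- rewrite (keyA r r' n0 HA) (keyA r r' n0 HB).
  by case: ifP => _; lia.
- have -> : \sum_(0%N <= t < q) \sum_(j < n) fe n B t (j%:Z - r) * - fe n A t (r' - j%:Z)
     = - \sum_(0%N <= t < q) \sum_(j < n) fe n A t (j%:Z - r) * fe n B t (r' - j%:Z).
    rewrite -sumrN; apply: eq_big_nat => t _; rewrite -sumrN sumrN (cross _ _ _ _ _ n0) -sumrN.
    by apply: eq_bigr => j _; rewrite mulrN.
  by rewrite addrN; lia.
- have -> : \sum_(0%N <= t < q) \sum_(j < n) - fe n A t (r - j%:Z) * fe n B t (j%:Z - r')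
     = - \sum_(0%N <= t < q) \sum_(j < n) fe n B t (r - j%:Z) * fe n A t (j%:Z - r').
    rewrite -sumrN; apply: eq_big_nat => t _; rewrite -sumrN.
    transitivity (- \sum_(j < n) fe n A t (j%:Z - r') * fe n B t (r - j%:Z)).
      rewrite (cross _ _ _ _ _ n0) -sumrN.
      by apply: eq_bigr => j _; rewrite mulNr mulrC.
    by rewrite sumrN; congr (- _); apply: eq_bigr => j _; rewrite mulrC.
  by rewrite addrN; lia.
- have -> : \sum_(0%N <= t < q) \sum_(j < n) - fe n A t (r - j%:Z) * - fe n A t (r' - j%:Z)
     = \sum_(0%N <= t < q) \sum_(j < n) fe n A t (r - j%:Z) * fe n A t (r' - j%:Z).
    by apply: eq_big_nat => t _; apply: eq_bigr => j _; rewrite mulrNN.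
  rewrite (keyR r r' n0 HA) (keyR r r' n0 HB).
  by case: ifP => _; lia.
Qed.

Lemma pm1_fe n q c L t x : (0 < n)%N -> PComS n q c L -> (t < q)%N -> pm1 (fe n L t x).
Proof.
move=> n0 H tq; have [szL mem _] := H.
have tL : (t < size L)%N by rewrite szL.
have /andP[/eqP sz /allP al] := mem _ (mem_nth [::] tL).
apply: al; apply: mem_nth; rewrite sz.
have nz : (n%:Z != 0) by rewrite eqz_nat -lt0n.
have := ltz_mod x nz; rewrite -{1}(gez0_abs (modz_ge0 x nz)) ltz_nat.
by [].
Qed.

Lemma pm1N x : pm1 (- x) = pm1 x.
Proof. by rewrite /pm1 !eqr_oppLR opprK orbC. Qed.

Lemma pm1_Ent n q c1 c2 A B top r k : (0 < n)%N ->
  PComS n q c1 A -> PComS n q c2 B -> pm1 (Ent n q A B top r k).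
Proof.
move=> n0 HA HB; rewrite /Ent.
case: ifP => h1.
  have tq : (k %/ n < q)%N by rewrite ltn_divLR // mulnC.
  by case: top; [apply: (pm1_fe _ n0 HA) | apply: (pm1_fe _ n0 HB)].
case: ifP => h2.
  have tq : ((k - n * q) %/ n < q)%N.
    rewrite ltn_divLR // mulnC; move/negbT: h1; rewrite -leqNgt => h1.
    lia.
  by case: top; [apply: (pm1_fe _ n0 HB) | rewrite pm1N; apply: (pm1_fe _ n0 HA)].
by case: ifP => _ //; case: top.
Qed.

Theorem theorem21 (n q : nat) (c1 c2 : int) :
  (1 <= n)%N -> (1 <= q)%N -> c1 + c2 = -2 ->
  (exists A : seq (seq int), PComS n q c1 A) ->
  (exists B : seq (seq int), PComS n q c2 B) ->
  exists H : 'M[int]_(2 * n, 2 * (n * q + 1)), PH H.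
Proof.
move=> n0 q0 hc [A HA] [B HB].
exists (\matrix_(i < 2 * n, k < 2 * (n * q + 1)) Ent n q A B (i < n)%N ((i %% n)%N)%:Z k).
split.
  by move=> i k; rewrite mxE; apply: (pm1_Ent _ _ _ n0 HA HB).
apply/matrixP => i i'; rewrite !mxE.
transitivity (\sum_(0%N <= k < (2 * (n * q + 1))%N)
   Ent n q A B (i < n)%N ((i %% n)%N)%:Z k * Ent n q A B (i' < n)%N ((i' %% n)%N)%:Z k).
  by rewrite big_mkord; apply: eq_bigr => k _; rewrite !mxE.
rewrite (gram _ _ _ _ n0 HA HB hc).
have hi := ltn_ord i; have hi' := ltn_ord i'.
have ri : (i %% n < n)%N by rewrite ltn_mod.
have ri' : (i' %% n < n)%N by rewrite ltn_mod.
case: (eqVneq i i') => [<-|ne].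
  by rewrite eqxx subrr mod0z eqxx /= mulr1n.
rewrite mulr0n.
case: eqP => // e1; case: eqP => // e2.
have := modeq0 n0 ri ri' e2 => e3.
by move/val_inj: (idx_eq hi hi' e1 e3) => h; rewrite h eqxx in ne.
Qed.
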